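(* Let $(J,S)$ be a homogeneous $d$-dimensional multi-time Markov renewal chain with semi-Markov kernel $q$, and let $1\le u<v\le d$. Define $Y_0=0$, $Y_{n+1}=X^{[u]}_{n+1}\cdot X^{[v]}_{n+1}$ and $S^{[y]}_n=\sum_{k=0}^nY_k$. Then $(J,S^{[y]})$ is a Markov renewal chain with interjump times $(Y_n)_{n\ge1}$ and semi-Markov kernel $$q^{[y]}_{ij}(k)=\sum_{k_{1:d}\in\mathbb{N}^d:\ k_u\cdot k_v=k}q_{ij}(k_{1:d}),\qquad i,j\in E,\ k\in\mathbb{N}.$$
   Context: $E=\{1,\dots,s\}$. $\mathbb{N}^d$ carries the partial order $k\le l$ iff $k_u\le l_u$ for all $u$, and $k<l$ iff $k\le l$, $k\ne l$. A homogeneous $d$-dimensional multi-time Markov renewal chain is a process $(J_n,S_n)_{n\in\mathbb{N}}$, $J_n\in E$, $S_n\in\mathbb{N}^d$, $S_0=0_d$, $S_n<S_{n+1}$, such that a.s. $\mathbb{P}(J_{n+1}=j,S_{n+1}-S_n=k\mid J_{0:n},S_{0:n})=q_{J_nj}(k)$ with $q_{ij}(k)=\mathbb{P}(J_{n+1}=j,S_{n+1}-S_n=k\mid J_n=i)$ independent of $n$. Sojourn times $X_0=0_d$, $X_n=S_n-S_{n-1}$, with $u$-th coordinate $X^{[u]}_n$. ''Markov renewal chain with kernel $q^{[y]}$'' means $\mathbb{P}(J_{n+1}=j,S^{[y]}_{n+1}-S^{[y]}_n=k\mid J_{0:n},S^{[y]}_{0:n})=q^{[y]}_{J_nj}(k)$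 a.s. *)

(* Defs.v *)
From HB Require Import structures.
From mathcomp Require Import all_boot all_order all_algebra.
From mathcomp Require Import all_classical all_reals all_analysis.
Set Implicit Arguments. Unset Strict Implicit. Unset Printing Implicit Defensive.
Import Order.TTheory GRing.Theory Num.Theory.
Local Open Scope classical_set_scope.
Local Open Scope ring_scope.

Definition vecN (d : nat) := {ffun 'I_d -> nat}.

Definition vadd (d : nat) (x y : vecN d) : vecN d := [ffun u => (x u + y u)%N].
Definition vsub (d : nat) (x y : vecN d) : vecN d := [ffun u => (x u - y u)%N].
Definition vzero (d : nat) : vecN d := [ffun _ => 0%N].
Definition vlt (d : nat) (x y : vecN d) : Prop :=
  (forall u, (x u <= y u)%N) /\ x <> y.

Section MRC.
Context {dm : measure_display} {T : measurableType dm} {R : realType}.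
Variable (P : probability T R).

Definition discrete_rv (V : Type) (Z : T -> V) : Prop :=
  forall v : V, measurable [set w | Z w = v].

Definition hist_event (E V : Type) (J : nat -> T -> E) (S : nat -> T -> V)
  (n : nat) (jh : nat -> E) (sh : nat -> V) : set T :=
  [set w | forall m, (m <= n)%N -> J m w = jh m /\ S m w = sh m].

(* Markov renewal property (discrete version of the a.s. conditional
   identity): P(J_{0:n}, S_{0:n}, J_{n+1}=j, S_{n+1}-S_n=k)
               = q_{J_n j}(k) P(J_{0:n}, S_{0:n}). *)
Definition MR_property (E V : Type) (plus : V -> V -> V)
  (J : nat -> T -> E) (S : nat -> T -> V) (q : E -> E -> V -> \bar R) : Prop :=
  forall (n : nat) (jh : nat -> E) (sh : nat -> V) (j : E) (k : V),
    P (hist_event J S n jh sh `&`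
       [set w | J n.+1 w = j /\ S n.+1 w = plus (S n w) k])
    = (q (jh n) j k * P (hist_event J S n jh sh))%E.

Definition MMRC (s d : nat) (J : nat -> T -> 'I_s) (S : nat -> T -> vecN d)
  (q : 'I_s -> 'I_s -> vecN d -> R) : Prop :=
  [/\ (forall n, discrete_rv (J n)),
      (forall n, discrete_rv (S n)),
      (forall w, S 0%N w = vzero d),
      (forall n w, vlt (S n w) (S n.+1 w)) &
      (forall i j k, 0 <= q i j k) /\
      MR_property (@vadd d) J S (fun i j k => (q i j k)%:E)].

Definition MRC (s : nat) (J : nat -> T -> 'I_s) (S : nat -> T -> nat)
  (q : 'I_s -> 'I_s -> nat -> \bar R) : Prop :=
  MR_property addn J S q.

End MRC.

Definition sojourn {T : Type} (d : nat) (S : nat -> T -> vecN d) (n : nat) (w : T)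
  : vecN d :=
  if n is n'.+1 then vsub (S n'.+1 w) (S n' w) else vzero d.

Definition Yprod {T : Type} (d : nat) (S : nat -> T -> vecN d) (u v : 'I_d)
  (n : nat) (w : T) : nat :=
  if n is n'.+1 then (sojourn S n'.+1 w u * sojourn S n'.+1 w v)%N else 0%N.

Definition Sy {T : Type} (d : nat) (S : nat -> T -> vecN d) (u v : 'I_d)
  (n : nat) (w : T) : nat :=
  (\sum_(0 <= m < n.+1) Yprod S u v m w)%N.

Definition qy {R : realType} (s d : nat) (q : 'I_s -> 'I_s -> vecN d -> R)
  (u v : 'I_d) (i j : 'I_s) (k : nat) : \bar R :=
  \esum_(x in [set x : vecN d | (x u * x v)%N = k]) (q i j x)%:E.

(* Main.v *)
Set Warnings "-all".
Require Import Defs.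
From HB Require Import structures.
From mathcomp Require Import all_boot all_order all_algebra.
From mathcomp Require Import all_classical all_reals all_analysis.
From mathcomp Require Import zify.
Set Implicit Arguments. Unset Strict Implicit. Unset Printing Implicit Defensive.
Import Order.TTheory GRing.Theory Num.Theory.
Local Open Scope classical_set_scope.
Local Open Scope ring_scope.
Local Open Scope ereal_scope.

Section Aux.
Variable R : realType.

Lemma esum_countE (I : countType) (D : set I) (a : I -> \bar R) :
  (forall i, D i -> 0 <= a i) ->
  \esum_(i in D) a i =
  \sum_(n <oo | n \in pickle @` D) (if unpickle n is Some i then a i else 0).
Proof.
move=> a0.
rewrite nneseries_esum; last first.
  by move=> n; rewrite inE => -[i Di <-]; rewrite pickleK; exact: a0.
rewrite set_mem_set esum_image; last by move=> x y _ _; exact: (pcan_inj (@pickleK I)).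
by apply: eq_esum => i _; rewrite pickleK.
Qed.

Lemma esumZl (I : countType) (D : set I) (a : I -> \bar R) (c : R) : (0 <= c)%R ->
  (forall i, D i -> 0 <= a i) ->
  \esum_(i in D) (c%:E * a i) = c%:E * \esum_(i in D) a i.
Proof.
move=> c0 a0; rewrite !esum_countE//; last first.
  by move=> i Di; rewrite mule_ge0// ?a0// lee_fin.
rewrite -nneseriesZl; last first.
  by move=> n; rewrite inE => -[i Di <-]; rewrite pickleK; exact: a0.
by apply: eq_eseriesr => n _; case: unpickle => //; rewrite mule0.
Qed.
Lemma measure_esum d (T : measurableType d) (mu : {measure set T -> \bar R})
  (I : countType) (D : set I) (F : I -> set T) :
  (forall i, D i -> measurable (F i)) -> trivIset D F ->
  mu (\bigcup_(i in D) F i) = \esum_(i in D) mu (F i).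
Proof.
move=> mF tF.
pose G n := if unpickle n is Some i then F i else set0.
have -> : \bigcup_(i in D) F i = \bigcup_(n in pickle @` D) G n.
  apply/seteqP; split => w.
  - move=> [i Di Fw]; exists (pickle i); first by exists i.
    by rewrite /G pickleK.
  - by move=> [_ [i Di <-]]; rewrite /G pickleK => Fw; exists i.
rewrite measure_bigcup.
- rewrite esum_countE; last by move=> *; exact: measure_ge0.
  by apply: eq_eseriesr => n; rewrite inE => -[i Di <-]; rewrite /G pickleK.
- by move=> _ [i Di <-]; rewrite /G pickleK; exact: mF.
- by move=> _ _ [i Di <-] [j Dj <-]; rewrite /G !pickleK => /(tF _ _ Di Dj) ->.
Qed.
Lemma bigcup_count_measurable d (T : measurableType d)
  (I : countType) (D : set I) (F : I -> set T) :
  (forall i, D i -> measurable (F i)) -> measurable (\bigcup_(i in D) F i).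
Proof.
move=> mF.
pose G n := if unpickle n is Some i then F i else set0.
have -> : \bigcup_(i in D) F i = \bigcup_(n in pickle @` D) G n.
  apply/seteqP; split => w.
  - move=> [i Di Fw]; exists (pickle i); first by exists i.
    by rewrite /G pickleK.
  - by move=> [_ [i Di <-]]; rewrite /G pickleK => Fw; exists i.
by apply: bigcup_measurable => _ [i Di <-]; rewrite /G pickleK; exact: mF.
Qed.
End Aux.

Lemma hist_measurable dm (T : measurableType dm) (E V : Type)
  (J : nat -> T -> E) (S : nat -> T -> V) n jh sh :
  (forall m, discrete_rv (J m)) -> (forall m, discrete_rv (S m)) ->
  measurable (hist_event J S n jh sh).
Proof.
move=> mJ mS.
have -> : hist_event J S n jh sh = \bigcap_(m in [set m | (m <= n)%N])
   ([set w | J m w = jh m] `&` [set w | S m w = sh m]) by [].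
apply: bigcap_measurable; first by exists 0%N.
by move=> m _; apply: measurableI; [exact: mJ | exact: mS].
Qed.

Lemma Sy_ext (T : Type) d (S : nat -> T -> vecN d) u v m w w' :
  (forall i, (i <= m)%N -> S i w = S i w') -> Sy S u v m w = Sy S u v m w'.
Proof.
move=> H; rewrite /Sy; apply: eq_big_nat => i /andP[_ ilt].
case: i ilt => // i ilt; rewrite /Yprod /sojourn !H //; lia.
Qed.

Lemma SyS (T : Type) d (S : nat -> T -> vecN d) u v n w :
  Sy S u v n.+1 w = (Sy S u v n w + Yprod S u v n.+1 w)%N.
Proof. by rewrite /Sy big_nat_recr. Qed.

Lemma vsub_vadd d (a x : vecN d) : vsub (vadd a x) a = x.
Proof. by apply/ffunP => i; rewrite !ffunE addKn. Qed.

Lemma vadd_vsub d (a b : vecN d) : (forall i, (a i <= b i)%N) -> vadd a (vsub b a) = b.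
Proof. by move=> H; apply/ffunP => i; rewrite !ffunE subnKC. Qed.

Theorem corollary2 (dm : measure_display) (T : measurableType dm) (R : realType)
  (P : probability T R) (s d : nat)
  (J : nat -> T -> 'I_s) (S : nat -> T -> vecN d)
  (q : 'I_s -> 'I_s -> vecN d -> R) (u v : 'I_d) :
  MMRC P J S q -> (u < v)%N ->
  MRC P J (Sy S u v) (qy q u v).
Proof.
move=> [mJ mS S0 Slt [q0 MR]] _ n jh sh j k.
pose Hn := {ffun 'I_n.+1 -> 'I_s * vecN d}.
pose hv (w : T) : Hn := [ffun m : 'I_n.+1 => (J m w, S m w)].
pose jhh (h : Hn) m := (h (inord m)).1.
pose shh (h : Hn) m := (h (inord m)).2.
have hist_hv h : hist_event J S n (jhh h) (shh h) = [set w | hv w = h].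
  apply/seteqP; split => w /=.
  - move=> H; apply/ffunP => m; rewrite ffunE.
    have := H m (ltn_ord m); rewrite /jhh /shh inord_val => -[-> ->].
    by case: (h m).
  - by move=> <- m mn; rewrite /jhh /shh ffunE /= inordK.
have hvE w w' m : hv w = hv w' -> (m <= n)%N -> J m w = J m w' /\ S m w = S m w'.
  by move=> /ffunP /(_ (inord m)) + mn; rewrite !ffunE inordK // => -[-> ->].
set A := hist_event J (Sy S u v) n jh sh.
set D := hv @` A.
set K := [set x : vecN d | (x u * x v)%N = k].
pose F (p : Hn * vecN d) := hist_event J S n (jhh p.1) (shh p.1) `&`
  [set w | J n.+1 w = j /\ S n.+1 w = vadd (S n w) p.2].
have hvA w w' : hv w = hv w' -> A w' -> A w.
  move=> Hw Aw' m mn; have [-> _] := hvE _ _ _ Hw mn; split; first exact: (Aw' m mn).1.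
  rewrite (@Sy_ext _ _ _ _ _ _ _ w'); first exact: (Aw' m mn).2.
  by move=> i im; exact: (hvE _ _ i Hw (leq_trans im mn)).2.
have mF p : measurable (F p).
  have -> : F p = hist_event J S n (jhh p.1) (shh p.1) `&`
      ([set w | J n.+1 w = j] `&` [set w | S n.+1 w = vadd (shh p.1 n) p.2]).
    apply/seteqP; split => w [Hw [Jw Sw]]; (split => //; split => //);
      by have [_ E] := Hw n (leqnn n); rewrite /= ?Sw E.
  apply: measurableI; first exact: hist_measurable.
  by apply: measurableI; [exact: mJ | exact: mS].
have tF : trivIset (D `*` K) F.
  move=> [h x] [h' x'] _ _ [w [[Hw [_ Sw]] [Hw' [_ Sw']]]].
  rewrite !hist_hv /= in Hw Hw'.
  congr pair; first by rewrite -Hw -Hw'.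
  by rewrite -(vsub_vadd (S n w) x) -Sw Sw' vsub_vadd.
rewrite (_ : _ `&` _ = \bigcup_(p in D `*` K) F p); last first.
  apply/seteqP; split => w.
  - move=> [Aw [Jw Syw]]; exists (hv w, sojourn S n.+1 w).
      split; first by exists w.
      by move: Syw; rewrite SyS => /addnI H; exact: H.
    split; first by rewrite /= hist_hv.
    by split => //=; rewrite vadd_vsub //; case: (Slt n w).
  - move=> [[h x] /= [[w' Aw' Eh] Kx] [Hw [Jw Sw]]]; subst h.
    rewrite /= hist_hv /= in Hw.
    split; first exact: hvA Hw Aw'.
    split => //; rewrite SyS; congr addn.
    by rewrite /Yprod /sojourn Sw vsub_vadd.
rewrite measure_esum //.
transitivity (\esum_(p in D `*` K) ((q (jh n) j p.2)%:E * P [set w | hv w = p.1])).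
  apply: eq_esum => -[h x] /= [[w' Aw' Eh] Kx]; subst h.
  rewrite /F MR hist_hv; congr (_%:E * _); congr q.
  by rewrite /jhh ffunE /= inordK //; exact: (Aw' n (leqnn n)).1.
rewrite (reindex_esum (K `*` D) (D `*` K) (fun p => (p.2, p.1))) /=; last first.
  split.
  - by move=> [x h] [Kx Dh].
  - by move=> [x h] [x' h'] _ _ [-> ->].
  - by move=> [h x] [Dh Kx]; exists (x, h).
rewrite -(esum_esum (I:=K) (J:=fun=> D)
   (a := fun x h => (q (jh n) j x)%:E * P [set w | hv w = h])); last first.
  by move=> x h _ _; rewrite mule_ge0 // lee_fin.
have Aeq : A = \bigcup_(h in D) [set w | hv w = h].
  apply/seteqP; split => w.
  - by move=> Aw; exists (hv w) => //; exists w.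
  - by move=> [_ [w' Aw' <-] Hw]; exact: hvA Hw Aw'.
have mH h : measurable [set w | hv w = h] by rewrite -hist_hv; exact: hist_measurable.
have tH : trivIset D (fun h => [set w | hv w = h]).
  by move=> h h' _ _ [w [/= <- <-]].
have mA : measurable A by rewrite Aeq; exact: bigcup_count_measurable.
transitivity (\esum_(x in K) ((q (jh n) j x)%:E * P A)).
  apply: eq_esum => x Kx; rewrite esumZl //.
  by rewrite Aeq measure_esum.
rewrite -[P A]fineK; last exact: fin_num_measure.
under eq_esum do rewrite muleC.
rewrite esumZl; last by move=> x _; rewrite lee_fin.
  by rewrite muleC.
by rewrite fine_ge0.
Qed.
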